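(* Let $q,r,\mu,\nu$ be positive integers and $z\in\mathbb{C}$. Define $\mathcal{A}(z)\in\mathbb{C}^{\mu q\times\nu r}$ as the block matrix whose $(i,j)$ block ($i=0,\dots,\mu-1$, $j=0,\dots,\nu-1$) is $A^{i+j}(z)$, define $\bar{\mathcal{A}}\in\mathbb{R}^{\mu q\times \nu r}$ as the block matrix whose $(i,j)$ block is $(S_q^\top)^jA^0S_r^i$, and define $\mathcal{L}_{\mu,q}(z)\in\mathbb{C}^{\mu q\times\mu q}$ as the block lower triangular matrix with $(i,j)$ block $\binom{i}{j}J_q(z)^{i-j}$ for $i\ge j$ and $0$ for $i<j$ ($i,j=0,\dots,\mu-1$), and $\mathcal{L}_{\nu,r}(z)\in\mathbb{C}^{\nu r\times\nu r}$ analogously with $J_r(z)$. Then \[ \mathcal{A}(z)=\mathcal{L}_{\mu,q}(z)\,\bar{\mathcal{A}}\,\mathcal{L}_{\nu,r}(z)^\top , \] in particular $\mathcal{A}(0)=\mathcal{L}_{\mu,q}(0)\bar{\mathcal{A}}\mathcal{L}_{\nu,r}(0)^\top$. Moreover, when these matrices are square, $\det(\mathcal{A}(z))=\det(\bar{\mathcal{A}})$.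
   Context: Matrix indices start at $0$. $S_n\in\mathbb{R}^{n\times n}$ is the shift matrix with $(S_n)_{ij}=\delta_{i+1,j}$, and $J_n(z)=zI_n+S_n^\top$. For $k\ge0$, $A^k(z)\in\mathbb{C}^{q\times r}$ has entries $A^k(z)_{ij}=\frac{1}{i!j!}\frac{d^{i+j}}{dz^{i+j}}z^k=\frac{k!}{i!j!(k-i-j)!}z^{k-i-j}$ (zero if $i+j>k$), $i=0,\dots,q-1$, $j=0,\dots,r-1$, and $A^k:=A^k(0)$; thus $A^0$ has a single nonzero entry $A^0_{00}=1$. *)

(* Defs.v *)
(* Matrices over an arbitrary numeric algebraically closed
   field C (this includes the complex numbers). *)
From mathcomp Require Import all_boot all_order all_algebra.
Set Implicit Arguments. Unset Strict Implicit. Unset Printing Implicit Defensive.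
Import Order.TTheory GRing.Theory Num.Theory.
Local Open Scope ring_scope.

Section Defs.
Variable C : numClosedFieldType.

Definition shiftmx (n : nat) : 'M[C]_n := \matrix_(i < n, j < n) ((i.+1 == j :> nat)%:R).

Definition jordanmx (n : nat) (z : C) : 'M[C]_n := z%:M + (shiftmx n)^T.

Definition Akmx (q r k : nat) (z : C) : 'M[C]_(q, r) :=
  \matrix_(i < q, j < r)
    (if (i + j <= k)%N
     then ((k`! %/ (i`! * j`! * (k - i - j)`!))%N)%:R * z ^+ (k - i - j)
     else 0).

(* Entry (x,y) of a p x s matrix, read with natural-number indices
   (0 outside the range; only used in range below). *)
Definition mxentry (p s : nat) (M : 'M[C]_(p, s)) (x y : nat) : C :=
  match @insub _ (fun t => t < p)%N 'I_p x, @insub _ (fun t => t < s)%N 'I_s y with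
  | Some i, Some j => M i j
  | _, _ => 0
  end.

(* Block matrix with m x n blocks, block (i,j) = B i j of size p x s,
   occupying rows i*p .. i*p+p-1 and columns j*s .. j*s+s-1. *)
Definition blockmx_of (m n p s : nat) (B : nat -> nat -> 'M[C]_(p, s))
  : 'M[C]_(m * p, n * s) :=
  \matrix_(a < m * p, b < n * s)
    mxentry (B (a %/ p)%N (b %/ s)%N) (a %% p)%N (b %% s)%N.

Definition calA (mu nu q r : nat) (z : C) : 'M[C]_(mu * q, nu * r) :=
  blockmx_of mu nu (fun i j => Akmx q r (i + j) z).

Definition barA (mu nu q r : nat) : 'M[C]_(mu * q, nu * r) :=
  blockmx_of mu nu (fun i j =>
    ((shiftmx q)^T ^+ j) *m Akmx q r 0 0 *m (shiftmx r ^+ i)).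

Definition calL (mu q : nat) (z : C) : 'M[C]_(mu * q) :=
  blockmx_of mu mu (fun i j =>
    if (j <= i)%N then ('C(i, j))%:R *: (jordanmx q z ^+ (i - j)) else 0).
End Defs.

(* Main.v *)
Require Import Defs.
From mathcomp Require Import all_boot all_order all_algebra.
From mathcomp Require Import ring.
Set Implicit Arguments. Unset Strict Implicit. Unset Printing Implicit Defensive.
Import GRing.Theory Num.Theory.
Local Open Scope ring_scope.

Lemma mxentry_ord {C : numClosedFieldType} p s (M : 'M[C]_(p, s)) (i : 'I_p) (j : 'I_s) :
  mxentry M i j = M i j.
Proof. by rewrite /mxentry !valK. Qed.

Lemma mxentry_tr {C : numClosedFieldType} p s (M : 'M[C]_(p, s)) x y :
  mxentry M^T x y = mxentry M y x.
Proof.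
rewrite /mxentry.
case: (@insub _ (fun t => t < s)%N 'I_s x) => [i|];
case: (@insub _ (fun t => t < p)%N 'I_p y) => [j|] //.
by rewrite mxE.
Qed.

Lemma mxentry0 {C : numClosedFieldType} p s x y : mxentry (0 : 'M[C]_(p, s)) x y = 0.
Proof.
rewrite /mxentry.
case: (@insub _ (fun t => t < p)%N 'I_p x) => [i|];
case: (@insub _ (fun t => t < s)%N 'I_s y) => [j|] //.
by rewrite mxE.
Qed.

Lemma sum_block {C : numClosedFieldType} n s (F : nat -> C) :
  \sum_(c < n * s) F c = \sum_(j < n) \sum_(y < s) F (j * s + y)%N.
Proof.
rewrite -(big_mkord (fun _ => true) F).
elim: n => [|n IH]; first by rewrite mul0n big_geq // big_ord0.
rewrite big_ord_recr /= -IH mulSnr (@big_cat_nat _ _ _ (n * s)) //=; last exact: leq_addr.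
congr (_ + _).
rewrite -{1}[(n * s)%N]add0n big_addn addKn big_mkord; apply: eq_bigr => i _.
by rewrite addnC.
Qed.

Lemma blk_div j s y : (y < s)%N -> ((j * s + y) %/ s)%N = j.
Proof. move=> h; rewrite divnMDl ?divn_small ?addn0 //; exact: leq_ltn_trans h. Qed.

Lemma blk_mod j s y : (y < s)%N -> ((j * s + y) %% s)%N = y.
Proof. by move=> h; rewrite modnMDl modn_small. Qed.

Lemma blockmx_mul {C : numClosedFieldType} m n k p s t
  (B : nat -> nat -> 'M[C]_(p, s)) (B' : nat -> nat -> 'M[C]_(s, t)) :
  blockmx_of m n B *m blockmx_of n k B' =
  blockmx_of m k (fun i l => \sum_(j < n) B i j *m B' j l).
Proof.
apply/matrixP => a b; rewrite !mxE; under eq_bigr do rewrite !mxE.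
have p0 : (0 < p)%N by case: p B a => [|p] // B [a]; rewrite muln0.
have t0 : (0 < t)%N by case: t B' b => [|t] // B' [b]; rewrite muln0.
pose ox : 'I_p := Ordinal (ltn_pmod a p0).
pose oy : 'I_t := Ordinal (ltn_pmod b t0).
rewrite -[(a %% p)%N]/(nat_of_ord ox) -[(b %% t)%N]/(nat_of_ord oy) mxentry_ord summxE.
rewrite (sum_block n s (fun c => mxentry (B (a %/ p)%N (c %/ s)%N) ox (c %% s)%N *
     mxentry (B' (c %/ s)%N (b %/ t)%N) (c %% s)%N oy)).
apply: eq_bigr => j _; rewrite mxE; apply: eq_bigr => y _.
by rewrite blk_div // blk_mod // !mxentry_ord.
Qed.

Lemma blockmx_tr {C : numClosedFieldType} m n p s (B : nat -> nat -> 'M[C]_(p, s)) :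
  (blockmx_of m n B)^T = blockmx_of n m (fun j i => (B i j)^T).
Proof. by apply/matrixP => a b; rewrite !mxE mxentry_tr. Qed.

Lemma blockmx_eq {C : numClosedFieldType} m n p s (B B' : nat -> nat -> 'M[C]_(p, s)) :
  (forall i j, (i < m)%N -> (j < n)%N -> B i j = B' i j) ->
  blockmx_of m n B = blockmx_of m n B'.
Proof.
move=> H; apply/matrixP => a b; rewrite !mxE.
have p0 : (0 < p)%N by case: p B B' H a => [|p] // B B' H [a]; rewrite muln0.
have s0 : (0 < s)%N by case: s B B' H b => [|s] // B B' H [b]; rewrite muln0.
by rewrite H // ltn_divLR.
Qed.
Definition gA {C : numClosedFieldType} (z : C) k x y : C :=
  ('C(k, x + y) * 'C(x + y, x))%:R * z ^+ (k - (x + y)).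

Lemma AkE {C : numClosedFieldType} q r k (z : C) (i : 'I_q) (j : 'I_r) :
  Akmx q r k z i j = gA z k i j.
Proof.
rewrite mxE /gA; case: leqP => h.
  have e : (k`! %/ (i`! * j`! * (k - i - j)`!))%N = ('C(k, i + j) * 'C(i + j, i))%N.
    rewrite -{1}(bin_fact h) -(bin_fact (leq_addr j i)) addKn -subnDA.
    have -> : ('C(k, i + j) * ('C(i + j, i) * (i`! * j`!) * (k - (i + j))`!))%N
      = ('C(k, i + j) * 'C(i + j, i)) * (i`! * j`! * (k - (i + j))`!) by ring.
    by rewrite mulnK // !muln_gt0 !fact_gt0.
  by rewrite e subnDA.
by rewrite bin_small // mul0n mul0r.
Qed.

Lemma gA_rec {C : numClosedFieldType} (z : C) k x y :
  gA z k.+1 x y = z * gA z k x y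
    + (if x is x'.+1 then gA z k x' y else 0)
    + (if y is y'.+1 then gA z k x y' else 0).
Proof.
rewrite /gA; case: x => [|x]; case: y => [|y].
- by rewrite !addn0 !bin0 !subn0 exprS; ring.
- rewrite !add0n !bin0 !muln1 !subSS binS natrD.
  case: (ltnP y k) => h.
    by rewrite -(subnSK h) exprS; ring.
  by rewrite (bin_small (n:=k)) // mul0r; ring.
- rewrite !addn0 !binn !muln1 !subSS binS natrD.
  case: (ltnP x k) => h.
    by rewrite -(subnSK h) exprS; ring.
  by rewrite (bin_small (n:=k)) // mul0r; ring.
- rewrite !addSn !addnS !subSS !binS.
  case: (ltnP (x + y).+1 k) => h.
    by rewrite -(subnSK h) exprS; ring.
  by rewrite (bin_small (n:=k) (m := (x+y).+2)) // mul0r; ring.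
Qed.
Lemma shiftT_mul {C : numClosedFieldType} q r (M : 'M[C]_(q, r)) (f : nat -> nat -> C) :
  (forall (c : 'I_q) (j : 'I_r), M c j = f c j) ->
  forall i j, ((shiftmx C q)^T *m M) i j = if (i : nat) is i'.+1 then f i' j else 0.
Proof.
move=> hM i j; rewrite mxE.
case hi: (nat_of_ord i) => [|i'].
  by apply: big1 => c _; rewrite !mxE hi mul0r.
have hi' : (i' < q)%N by apply: ltnW; rewrite -hi.
rewrite (bigD1 (Ordinal hi')) //= !mxE hi eqxx mul1r big1 ?addr0 ?hM //.
move=> c hc; rewrite !mxE hi eqSS.
have -> : (nat_of_ord c == i') = false.
  by apply/negbTE; apply: contra hc => /eqP e; apply/eqP/val_inj.
by rewrite mul0r.
Qed.

Lemma mul_shift {C : numClosedFieldType} q r (M : 'M[C]_(q, r)) (f : nat -> nat -> C) :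
  (forall (i : 'I_q) (c : 'I_r), M i c = f i c) ->
  forall i j, (M *m shiftmx C r) i j = if (j : nat) is j'.+1 then f i j' else 0.
Proof.
move=> hM i j; rewrite mxE.
case hj: (nat_of_ord j) => [|j'].
  by apply: big1 => c _; rewrite !mxE hj mulr0.
have hj' : (j' < r)%N by apply: ltnW; rewrite -hj.
rewrite (bigD1 (Ordinal hj')) //= !mxE hj eqxx mulr1 big1 ?addr0 ?hM //.
move=> c hc; rewrite !mxE hj eqSS.
have -> : (nat_of_ord c == j') = false.
  by apply/negbTE; apply: contra hc => /eqP e; apply/eqP/val_inj.
by rewrite mulr0.
Qed.

Lemma Ak_rec {C : numClosedFieldType} q r k (z : C) :
  Akmx q r k.+1 z = jordanmx q z *m Akmx q r k z + Akmx q r k z *m shiftmx C r.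
Proof.
apply/matrixP => i j.
transitivity ((z *: Akmx q r k z) i j + ((shiftmx C q)^T *m Akmx q r k z) i j
   + (Akmx q r k z *m shiftmx C r) i j).
  rewrite AkE gA_rec (shiftT_mul (f := gA z k) (@AkE _ _ _ _ _)).
  by rewrite (mul_shift (f := gA z k) (@AkE _ _ _ _ _)) mxE AkE.
by rewrite /jordanmx mulmxDl mul_scalar_mx !mxE.
Qed.

Lemma binexp {C : numClosedFieldType} q r (P : nat -> 'M[C]_(q, r)) (X : 'M[C]_q) (Y : 'M[C]_r) :
  (forall k, P k.+1 = X *m P k + P k *m Y) ->
  forall i j, P (i + j)%N = \sum_(a < i.+1) 'C(i, a)%:R *: (X ^+ (i - a) *m P j *m Y ^+ a).
Proof.
move=> hP.
have eX : forall n, X *m X ^+ n = X ^+ n.+1 by move=> n; rewrite exprS mulmxE.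
have eY : forall n, Y ^+ n *m Y = Y ^+ n.+1 by move=> n; rewrite exprSr mulmxE.
elim=> [|i IH] j.
  by rewrite add0n big_ord1 /= expr0 mul1mx mulmx1 scale1r.
rewrite addSn hP IH mulmx_sumr mulmx_suml.
have L1 : \sum_(a < i.+1) X *m ('C(i, a)%:R *: (X ^+ (i - a) *m P j *m Y ^+ a))
   = X ^+ i.+1 *m P j + \sum_(a < i) 'C(i, a.+1)%:R *: (X ^+ (i - a) *m P j *m Y ^+ a.+1).
  rewrite big_ord_recl /= subn0 bin0 scale1r expr0 mulmx1 mulmxA eX.
  congr (_ + _); apply: eq_bigr => a _.
  by rewrite -scalemxAr !mulmxA eX /bump /= add1n subnSK.
have L2 : \sum_(a < i.+1) ('C(i, a)%:R *: (X ^+ (i - a) *m P j *m Y ^+ a)) *m Y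
   = \sum_(a < i.+1) 'C(i, a)%:R *: (X ^+ (i - a) *m P j *m Y ^+ a.+1).
  by apply: eq_bigr => a _; rewrite -scalemxAl -mulmxA eY.
have R1 : \sum_(a < i.+2) 'C(i.+1, a)%:R *: (X ^+ (i.+1 - a) *m P j *m Y ^+ a)
   = X ^+ i.+1 *m P j + (\sum_(a < i) 'C(i, a.+1)%:R *: (X ^+ (i - a) *m P j *m Y ^+ a.+1)
      + \sum_(a < i.+1) 'C(i, a)%:R *: (X ^+ (i - a) *m P j *m Y ^+ a.+1)).
  rewrite big_ord_recl /= subn0 bin0 scale1r expr0 mulmx1.
  congr (_ + _).
  rewrite (eq_bigr (fun a : 'I_i.+1 => 'C(i, a.+1)%:R *: (X ^+ (i - a) *m P j *m Y ^+ a.+1)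
      + 'C(i, a)%:R *: (X ^+ (i - a) *m P j *m Y ^+ a.+1))); last first.
    by move=> a _; rewrite /bump /= add1n binS natrD scalerDl subSS.
  by rewrite big_split /= [in LHS]big_ord_recr /= bin_small // scale0r addr0.
by rewrite L1 L2 R1 addrA.
Qed.

Lemma Ak0 {C : numClosedFieldType} q r (z : C) : Akmx q r 0 z = Akmx q r 0 0.
Proof. by apply/matrixP => i j; rewrite !mxE; case: leqP => // _; rewrite !sub0n !expr0. Qed.

Lemma jordan_tr {C : numClosedFieldType} r (z : C) : (jordanmx r z)^T = z%:M + shiftmx C r.
Proof. by apply/matrixP => i j; rewrite !mxE eq_sym. Qed.

Lemma Ak_rec2 {C : numClosedFieldType} q r k (z : C) :
  Akmx q r k.+1 z = (shiftmx C q)^T *m Akmx q r k z + Akmx q r k z *m (jordanmx r z)^T.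
Proof.
rewrite Ak_rec jordan_tr /jordanmx mulmxDl mulmxDr mul_scalar_mx mul_mx_scalar.
by rewrite addrA [z *: _ + _]addrC.
Qed.

Lemma expand1 {C : numClosedFieldType} q r (z : C) i j :
  Akmx q r (i + j) z = \sum_(a < i.+1) 'C(i, a)%:R *:
     (jordanmx q z ^+ (i - a) *m Akmx q r j z *m shiftmx C r ^+ a).
Proof. exact: (binexp (@Ak_rec C q r ^~ z)). Qed.

Lemma expand2 {C : numClosedFieldType} q r (z : C) j :
  Akmx q r j z = \sum_(b < j.+1) 'C(j, b)%:R *:
     ((shiftmx C q)^T ^+ b *m Akmx q r 0 0 *m (jordanmx r z)^T ^+ (j - b)).
Proof.
rewrite -{1}[j]addn0 (binexp (@Ak_rec2 C q r ^~ z)) Ak0.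
rewrite (reindex_inj rev_ord_inj) /=; apply: eq_bigr => b _.
rewrite subSS subKn ?bin_sub //; rewrite -ltnS; exact: ltn_ord.
Qed.

Lemma trunc_ord {C : numClosedFieldType} p s n m (h : (m <= n)%N) (F : 'I_n -> 'M[C]_(p, s)) :
  (forall a : 'I_n, (m <= a)%N -> F a = 0) ->
  \sum_(a < n) F a = \sum_(a < m) F (widen_ord h a).
Proof.
move=> h0; rewrite -big_ord_narrow (bigID (fun a : 'I_n => (a < m)%N)) /=.
by rewrite [X in _ + X]big1 ?addr0 // => a; rewrite -leqNgt; exact: h0.
Qed.

Lemma trmxZ {C : numClosedFieldType} p s (c : C) (M : 'M[C]_(p, s)) : (c *: M)^T = c *: M^T.
Proof. by apply/matrixP => i j; rewrite !mxE. Qed.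

Lemma trmxX {C : numClosedFieldType} p (M : 'M[C]_p) n : (M ^+ n)^T = (M^T) ^+ n.
Proof.
elim: n => [|n IH]; first by rewrite !expr0 trmx1.
by rewrite exprS -mulmxE trmx_mul IH mulmxE -exprSr.
Qed.

Lemma main1 {C : numClosedFieldType} q r mu nu (z : C) :
  calA mu nu q r z = calL mu q z *m barA C mu nu q r *m (calL nu r z)^T.
Proof.
rewrite /calA /calL /barA blockmx_tr !blockmx_mul; apply: blockmx_eq => i j hi hj /=.
rewrite (trunc_ord hj); last first.
  by move=> b hb; rewrite leqNgt hb /= trmx0 mulmx0.
under eq_bigr do rewrite mulmx_suml.
rewrite exchange_big /= (trunc_ord hi); last first.
  by move=> a ha; apply: big1 => b _; rewrite leqNgt ha /= !mul0mx.
rewrite expand1; apply: eq_bigr => a _.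
have ha : (a <= i)%N by rewrite -ltnS.
rewrite /= ha expand2 mulmx_sumr mulmx_suml scaler_sumr; apply: eq_bigr => b _.
have hb : (b <= j)%N by rewrite -ltnS.
rewrite /= hb trmxZ trmxX.
rewrite -?scalemxAl -?scalemxAr -?scalemxAl -?scalemxAr -?scalemxAl -?scalemxAr !scalerA [_ * _]mulrC.
congr (_ *: _).
have c1 : GRing.comm (shiftmx C r) (jordanmx r z)^T.
  by rewrite /GRing.comm jordan_tr -!mulmxE mulmxDl mulmxDr scalar_mxC.
have c2 := commrX a (commr_sym (commrX (j - b) c1)).
rewrite /GRing.comm -!mulmxE in c2.
by rewrite !mulmxA -[X in X = _]mulmxA c2 mulmxA.
Qed.

Lemma mxentry_lt {C : numClosedFieldType} p s (M : 'M[C]_(p, s)) x y (hx : (x < p)%N) (hy : (y < s)%N) :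
  mxentry M x y = M (Ordinal hx) (Ordinal hy).
Proof. by rewrite /mxentry (@insubT _ (fun t => (t < p)%N) 'I_p x hx) (@insubT _ (fun t => (t < s)%N) 'I_s y hy). Qed.

Lemma detL {C : numClosedFieldType} mu q (z : C) : \det (calL mu q z) = 1.
Proof.
have q0 : forall a : 'I_(mu * q), (0 < q)%N.
  by case: q {z} => [|q] // [a]; rewrite muln0.
rewrite det_trig; last first.
  apply/is_trig_mxP => a b hab; rewrite mxE.
  have hle : (a %/ q <= b %/ q)%N := leq_div2r q (ltnW hab).
  case: (ltnP (a %/ q) (b %/ q)) => h.
    exact: mxentry0.
  have e : (a %/ q)%N = (b %/ q)%N by apply/anti_leq; rewrite hle h.
  rewrite e subnn expr0 binn scale1r.
  rewrite (mxentry_lt _ (ltn_pmod a (q0 a)) (ltn_pmod b (q0 a))) !mxE.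
  have : (a %% q)%N != (b %% q)%N.
    apply/negP => /eqP em.
    have : nat_of_ord a = b by rewrite (divn_eq a q) (divn_eq b q) e em.
    by move=> eab; move: hab; rewrite eab ltnn.
  by rewrite -val_eqE /= => /negbTE ->.
apply: big1 => a _; rewrite /calL /blockmx_of mxE leqnn subnn expr0 binn scale1r.
by rewrite (mxentry_lt _ (ltn_pmod a (q0 a)) (ltn_pmod a (q0 a))) !mxE eqxx.
Qed.

Lemma det_cast m n (e : m = n) {C : numClosedFieldType} (M : 'M[C]_m) (A : 'M[C]_(m, n)) (N : 'M[C]_n) :
  \det (castmx (erefl m, esym e) (M *m A *m N))
  = \det M * \det (castmx (erefl m, esym e) A) * \det N.
Proof. by case: n / e A N => A N; rewrite /= !castmx_id !det_mulmx. Qed.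

Theorem theorem2p2 (C : numClosedFieldType) (q r mu nu : nat)
  (hq : (0 < q)%N) (hr : (0 < r)%N) (hmu : (0 < mu)%N) (hnu : (0 < nu)%N)
  (z : C) :
  [/\ calA mu nu q r z = calL mu q z *m barA C mu nu q r *m (calL nu r z)^T,
      calA mu nu q r 0 = calL mu q 0 *m barA C mu nu q r *m (calL nu r 0)^T
    & forall e : (mu * q = nu * r)%N,
        \det (castmx (erefl (mu * q)%N, esym e) (calA mu nu q r z))
        = \det (castmx (erefl (mu * q)%N, esym e) (barA C mu nu q r))].
Proof.
split; [exact: main1 | exact: main1 |] => e.
by rewrite main1 det_cast det_tr !detL mul1r mulr1.
Qed.
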